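(* Let $T$ be a TCD map on a minimal BTB graph $G$. Let $f$ be an internal face with boundary vertices $b_1,w_1,\dots,b_m,w_m$ in counterclockwise cyclic order (so $b_i$ is adjacent to $w_{i-1}$ and $w_i$, indices mod $m$), and let $v_i$ be the third white neighbour of $b_i$. Then $$X_f=(-1)^{m+1}\,\mathrm{mr}\bigl(T(w_1),T(v_2),T(w_2),T(v_3),\dots,T(w_m),T(v_1)\bigr)=-\prod_{i=1}^m\lambda\bigl(T(w_{i-1}),T(w_i),T(v_i)\bigr).$$
   Context: A BTB graph is a planar bipartite graph (black $B$, white $W$, faces $F$) in a disk or cactus. It has boundary white vertices on the boundary and every black vertex of degree $3$. It is minimal if zig-zag paths (turning maximally left at white and right at black vertices) are never closed, never traverse an edge twice, and no two both traverse two distinct edges $e_1$ then $e_2$. Internal faces are those not adjacent to the boundary. A TCD map is $T:W\to\mathbb{CP}^d$ such that the neighbours of each black vertex have pairwise distinct collinear images. A VRC of $T$ consists of lifts $V(w)\neq 0$ and nonzero weights $\mu$ with $\sum_{w\sim b}\mu(bw)V(w)=0$. The projective cluster variable of an internal face is $X_f=(-1)^{m+1}\prod_{i=1}^m\mu(b_iw_i)/\mu(b_iw_{i-1})$, with labelling as in the claim; it is gauge independent. For collinear $P_1,P_2,P_3$ in an affine chart, $\lambda(P_1,P_2,P_3)=(P_1-P_3)/(P_2-P_3)$. For points $P_1,P_{1,2},P_2,P_{2,3},\dots,P_m,P_{m,1}$ with each $P_{i,i+1}$ on the line $P_iP_{i+1}$, the multi-ratio is $\mathrm{mr}=\prod_{i=1}^m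 (P_i-P_{i,i+1})/(P_{i,i+1}-P_{i+1})$, computed in any affine chart containing all points. *)

(* Defs.v *)
From mathcomp Require Import all_boot all_algebra.
From mathcomp Require Import complex.
From mathcomp Require Import Rstruct.
From Stdlib Require Reals.
Set Implicit Arguments. Unset Strict Implicit. Unset Printing Implicit Defensive.
Import GRing.Theory.
Local Open Scope ring_scope.

Definition CC : fieldType := (Rdefinitions.R)[i].

(* A point of CP^d is represented by a nonzero homogeneous coordinate vector
   in C^(d+1) (a row vector); two such vectors represent the same point iff
   they are proportional. *)
Definition pt (d : nat) := 'rV[CC]_(d.+1).

Definition proj_eq (d : nat) (p q : pt d) : Prop :=
  exists c : CC, c != 0 /\ p = c *: q.

Definition collinear3 (d : nat) (p q r : pt d) : Prop :=
  (\rank (col_mx p (col_mx q r)) <= 2)%N.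

Definition black_deg3 (B W : finType) (adj : B -> W -> bool) : Prop :=
  forall b : B, #|[set w | adj b w]| = 3%N.

Definition tcd_map (d : nat) (B W : finType) (adj : B -> W -> bool)
  (T : W -> pt d) : Prop :=
  (forall w, T w != 0) /\
  (forall b w1 w2, adj b w1 -> adj b w2 -> w1 != w2 -> ~ proj_eq (T w1) (T w2)) /\
  (forall b w1 w2 w3, adj b w1 -> adj b w2 -> adj b w3 ->
     collinear3 (T w1) (T w2) (T w3)).

Definition vrc (d : nat) (B W : finType) (adj : B -> W -> bool)
  (T : W -> pt d) (V : W -> pt d) (mu : B -> W -> CC) : Prop :=
  (forall w, V w != 0 /\ proj_eq (V w) (T w)) /\
  (forall b w, adj b w -> mu b w != 0) /\
  (forall b, \sum_(w | adj b w) mu b w *: V w = 0).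

Definition iprev (n : nat) (i : 'I_n.+1) : 'I_n.+1 := ord_pred i.
Definition inext (n : nat) (i : 'I_n.+1) : 'I_n.+1 := ordS i.

(* Local data of a face with boundary b_1,w_1,...,b_m,w_m (indices mod m,
   here 0..m-1 with m = n.+1): b_i is adjacent to w_{i-1} and w_i, and v_i
   is the third white neighbour of b_i. *)
Definition face_labelling (B W : finType) (adj : B -> W -> bool) (n : nat)
  (bs : 'I_n.+1 -> B) (ws vs : 'I_n.+1 -> W) : Prop :=
  forall i, [/\ adj (bs i) (ws (iprev i)), adj (bs i) (ws i) & adj (bs i) (vs i)]
     /\ [/\ ws (iprev i) != ws i, vs i != ws (iprev i) & vs i != ws i].

Definition cluster_var (B W : finType) (n : nat) (mu : B -> W -> CC)
  (bs : 'I_n.+1 -> B) (ws : 'I_n.+1 -> W) : CC :=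
  (-1) ^+ (n.+1).+1 * \prod_(i < n.+1) (mu (bs i) (ws i) / mu (bs i) (ws (iprev i))).

(* An affine chart of CP^d is given by a nonzero linear form h (a column
   vector); it contains p iff h(p) != 0, and there p is represented by the
   affine point p / h(p) in the affine hyperplane {h = 1} ~ C^d. *)
Definition hval (d : nat) (h : 'cV[CC]_(d.+1)) (p : pt d) : CC := (p *m h) 0 0.
Definition in_chart (d : nat) (h : 'cV[CC]_(d.+1)) (p : pt d) : bool :=
  hval h p != 0.
Definition aff (d : nat) (h : 'cV[CC]_(d.+1)) (p : pt d) : pt d :=
  (hval h p)^-1 *: p.

Definition vratio (d : nat) (u v : pt d) : CC :=
  if [pick j | v 0 j != 0] is Some j then u 0 j / v 0 j else 0.

Definition lambda (d : nat) (h : 'cV[CC]_(d.+1)) (P1 P2 P3 : pt d) : CC :=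
  vratio (aff h P1 - aff h P3) (aff h P2 - aff h P3).

(* Multi-ratio of P_1, P_{1,2}, P_2, P_{2,3}, ..., P_m, P_{m,1}:
   prod_i (P_i - P_{i,i+1}) / (P_{i,i+1} - P_{i+1}), computed in chart h.
   P i = P_i and Q i = P_{i,i+1}. *)
Definition multiratio (d n : nat) (h : 'cV[CC]_(d.+1)) (P Q : 'I_n.+1 -> pt d) : CC :=
  \prod_(i < n.+1) vratio (aff h (P i) - aff h (Q i)) (aff h (Q i) - aff h (P (inext i))).

(* Main.v *)
Require Import Defs.
From mathcomp Require Import all_boot all_algebra.
From mathcomp Require Import ring.
Import GRing.Theory.
Local Open Scope ring_scope.
Set Implicit Arguments. Unset Strict Implicit.

Lemma hvalD d (h : 'cV[CC]_(d.+1)) (u v : pt d) : hval h (u + v) = hval h u + hval h v.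
Proof. by rewrite /hval mulmxDl mxE. Qed.
Lemma hvalZ d (h : 'cV[CC]_(d.+1)) (s : CC) (u : pt d) : hval h (s *: u) = s * hval h u.
Proof. by rewrite /hval -scalemxAl mxE. Qed.
Lemma hval0 d (h : 'cV[CC]_(d.+1)) : hval h 0 = 0.
Proof. by rewrite /hval mul0mx mxE. Qed.
Lemma hval_aff d (h : 'cV[CC]_(d.+1)) (p : pt d) : hval h p != 0 -> hval h (aff h p) = 1.
Proof. by move=> hp; rewrite /aff hvalZ mulVf. Qed.

Lemma core d (h : 'cV[CC]_(d.+1)) (Ax Ay Az : pt d) (a b c : CC) :
  hval h Ax = 1 -> hval h Ay = 1 -> hval h Az = 1 -> a != 0 ->
  a *: Ax + b *: Ay + c *: Az = 0 -> Ax - Az = (- b / a) *: (Ay - Az).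
Proof.
move=> hx hy hz Ha E.
have Hs : a + b + c = 0.
  by have := congr1 (hval h) E; rewrite !hvalD !hvalZ hx hy hz !mulr1 hval0.
have Hg : c = c - (a + b + c) by rewrite Hs subr0.
rewrite Hg in E.
apply/rowP => j; have := congr1 (fun M : pt d => M 0 j) E; rewrite !mxE => Ej.
have hx' : Ax 0 j = Ax 0 j - (a * Ax 0 j + b * Ay 0 j + (c - (a + b + c)) * Az 0 j) / a
  by rewrite Ej mul0r subr0.
rewrite hx'; field; exact: Ha.
Qed.

Lemma vratioZ d (u v : pt d) s : v != 0 -> u = s *: v -> vratio u v = s.
Proof.
move=> nz ->; rewrite /vratio; case: pickP => [j Hj | H]; first by rewrite mxE mulfK.
exfalso; move/eqP: nz; apply; apply/rowP => j; rewrite mxE.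
have := H j; by move/negbFE/eqP.
Qed.

Lemma aff_neq d (h : 'cV[CC]_(d.+1)) (p q : pt d) :
  hval h p != 0 -> hval h q != 0 -> ~ proj_eq p q -> aff h p - aff h q != 0.
Proof.
move=> hp hq npq; rewrite subr_eq0; apply/negP => /eqP E; apply: npq.
exists (hval h p / hval h q); split; first by rewrite mulf_neq0 // invr_eq0.
rewrite /aff in E.
by rewrite -scalerA -E scalerA mulfV // scale1r.
Qed.

Lemma sum3 (V : zmodType) (B W : finType) (adj : B -> W -> bool) (b : B) (x y z : W)
  (F : W -> V) :
  #|[set w | adj b w]| = 3%N -> adj b x -> adj b y -> adj b z ->
  x != y -> x != z -> y != z -> \sum_(w | adj b w) F w = F x + F y + F z.
Proof.
move=> H3 ax ay az nxy nxz nyz.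
have Hs : [set w | adj b w] = x |: [set y; z].
  apply/eqP; rewrite eq_sym eqEcard; apply/andP; split.
    apply/subsetP => w; rewrite !inE => /orP [/eqP -> // | /orP [] /eqP -> //].
  rewrite H3 cardsU1 cards2 !inE nyz negb_or nxy nxz.
  by [].
rewrite (eq_bigl (fun w => w \in [set w | adj b w])); last by move=> w; rewrite inE.
rewrite Hs big_setU1 ?inE ?negb_or ?nxy ?nxz // big_setU1 ?inE // big_set1.
by rewrite /= addrA.
Qed.

Lemma kA d (W : finType) (T V : W -> pt d) (h : 'cV[CC]_(d.+1)) w :
  proj_eq (V w) (T w) -> in_chart h (T w) ->
  hval h (V w) != 0 /\ V w = hval h (V w) *: aff h (T w).
Proof.
move=> [c [cnz ->]] hT; rewrite /in_chart in hT.
rewrite hvalZ /aff scalerA; split; first by rewrite mulf_neq0.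
by rewrite mulfK.
Qed.

Lemma face_step (d : nat) (B W : finType) (adj : B -> W -> bool)
  (T : W -> pt d) (V : W -> pt d) (mu : B -> W -> CC)
  (n : nat) (bs : 'I_n.+1 -> B) (ws vs : 'I_n.+1 -> W)
  (h : 'cV[CC]_(d.+1)) :
  black_deg3 adj ->
  tcd_map adj T ->
  vrc adj T V mu ->
  face_labelling adj bs ws vs ->
  (forall i, in_chart h (T (ws i)) && in_chart h (T (vs i))) ->
  forall i,
  aff h (T (ws (iprev i))) - aff h (T (vs i)) =
    (- (mu (bs i) (ws i) * hval h (V (ws i))) / (mu (bs i) (ws (iprev i)) * hval h (V (ws (iprev i)))))
      *: (aff h (T (ws i)) - aff h (T (vs i)))
  /\ aff h (T (ws i)) - aff h (T (vs i)) != 0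
  /\ mu (bs i) (ws i) != 0 /\ mu (bs i) (ws (iprev i)) != 0
  /\ hval h (V (ws i)) != 0.
Proof.
move=> Hdeg [Tnz [Tdist Tcol]] [Vok [munz Vsum]] Hlab Hch i.
have [[ax ay az] [nxy nzx nzy]] := Hlab i.
have /andP [cy cz] := Hch i.
have /andP [cx _] := Hch (iprev i).
have [kx Vx] := kA (proj2 (Vok (ws (iprev i)))) cx.
have [ky Vy] := kA (proj2 (Vok (ws i))) cy.
have [kz Vz] := kA (proj2 (Vok (vs i))) cz.
have E := Vsum (bs i).
rewrite (sum3 _ (Hdeg (bs i)) ax ay az nxy) in E; last 2 first.
- by rewrite eq_sym.
- by rewrite eq_sym.
rewrite Vx Vy Vz in E.
set Ax := aff h (T (ws (iprev i))) in E *.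
set Ay := aff h (T (ws i)) in E *.
set Az := aff h (T (vs i)) in E *.
have E' : (mu (bs i) (ws (iprev i)) * hval h (V (ws (iprev i)))) *: Ax
   + (mu (bs i) (ws i) * hval h (V (ws i))) *: Ay
   + (mu (bs i) (vs i) * hval h (V (vs i))) *: Az = 0 by rewrite -!scalerA.
have mx := munz _ _ ax; have my := munz _ _ ay.
split.
  apply: (core _ _ _ _ E').
  - exact: hval_aff.
  - exact: hval_aff.
  - exact: hval_aff.
  - by rewrite mulf_neq0.
split; last by [].
apply: aff_neq => //.
apply: (Tdist (bs i)) => //; by rewrite eq_sym.
Qed.

Unset Implicit Arguments. Set Strict Implicit.
Theorem proposition7p10 (d : nat) (B W : finType) (adj : B -> W -> bool)
  (T : W -> pt d) (V : W -> pt d) (mu : B -> W -> CC)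
  (n : nat) (bs : 'I_n.+1 -> B) (ws vs : 'I_n.+1 -> W)
  (h : 'cV[CC]_(d.+1)) :
  black_deg3 adj ->
  tcd_map adj T ->
  vrc adj T V mu ->
  face_labelling adj bs ws vs ->
  (forall i, in_chart h (T (ws i)) && in_chart h (T (vs i))) ->
  cluster_var mu bs ws
    = (-1) ^+ (n.+1).+1 * multiratio h (fun i => T (ws i)) (fun i => T (vs (inext i)))
  /\ cluster_var mu bs ws
    = - \prod_(i < n.+1) lambda h (T (ws (iprev i))) (T (ws i)) (T (vs i)).
Proof.
move=> Hdeg Htcd Hvrc Hlab Hch.
have S := face_step Hdeg Htcd Hvrc Hlab Hch.
pose K (j : 'I_n.+1) := hval h (V (ws j)).
pose r (j : 'I_n.+1) := mu (bs j) (ws j) / mu (bs j) (ws (iprev j)).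
pose G (j : 'I_n.+1) := r j * (K j / K (iprev j)).
have Kt : \prod_(j < n.+1) (K j / K (iprev j)) = 1.
  rewrite prodf_div {1}(reindex_inj (@ord_pred_inj n.+1)) /=.
  rewrite divff //; apply/prodf_neq0 => j _.
  by have [_ [_ [_ [_ H]]]] := S (ord_pred j).
have PG : \prod_(j < n.+1) G j = \prod_(j < n.+1) r j.
  by rewrite big_split /= Kt mulr1.
have Hlam : forall j, lambda h (T (ws (iprev j))) (T (ws j)) (T (vs j)) = - G j.
  move=> j; have [E [nz [m1 [m2 k1]]]] := S j.
  have [_ [_ [_ [_ k2]]]] := S (iprev j).
  rewrite /lambda (vratioZ nz E) /G /r /K; field.
  by rewrite ?m1 ?m2 ?k1 ?k2.
have Hmr : forall j, vratio (aff h (T (ws j)) - aff h (T (vs (inext j))))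
                            (aff h (T (vs (inext j))) - aff h (T (ws (inext j)))) = G (inext j).
  move=> j; have [E [nz [m1 [m2 k1]]]] := S (inext j).
  have [_ [_ [_ [_ k2]]]] := S j.
  rewrite /G /r /K /iprev /inext ordSK in E m2 nz m1 k1 *.
  set Ax := aff h (T (ws j)) in E *.
  set Ay := aff h (T (ws (ordS j))) in E nz *.
  set Az := aff h (T (vs (ordS j))) in E nz *.
  have nz' : Az - Ay != 0 by rewrite -[Az - Ay]opprB oppr_eq0.
  apply: (vratioZ nz').
  rewrite E -[Az - Ay]opprB scalerN -scaleNr; congr (_ *: _).
  field.
  by rewrite ?m1 ?m2 ?k1 ?k2.
rewrite /cluster_var /multiratio; split.
  congr (_ * _); rewrite (eq_bigr _ (fun j _ => Hmr j)).
  have -> : \prod_(i < n.+1) G (inext i) = \prod_(i < n.+1) G i.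
    by rewrite [RHS](reindex_inj (@ordS_inj n.+1)).
  by rewrite PG.
rewrite (eq_bigr _ (fun j _ => Hlam j)) prodrN card_ord PG.
by rewrite exprS; ring.
Qed.
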